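(* Let $0\le\alpha\le\beta\le\pi/2$, $P_1,P_2>0$, and define $\phi$ and $\mathcal R(\theta)$ as in the context. Then $$\max\Big\{R_1+R_2:(R_1,R_2)\in\bigcup_{\theta\in[\alpha,\beta]}\mathcal R(\theta)\Big\}=\mathcal C\big(\phi(\theta^* )\big),$$ where, with $T=\frac{P_1\sin2\alpha+P_2\sin2\beta}{P_1\cos2\alpha+P_2\cos2\beta}$ (assuming $P_1\cos2\alpha+P_2\cos2\beta\neq0$), $\theta^*=\frac12\arctan T$ if $T\ge0$ and $\theta^*=\frac12(\pi+\arctan T)$ if $T\le0$.
   Context: $\mathcal C(x)=\frac12\log_2(1+x)$, $\phi_1(\theta)=P_1\cos^2(\theta-\alpha)$, $\phi_2(\theta)=P_2\cos^2(\theta-\beta)$, $\phi=\phi_1+\phi_2$, and $\mathcal R(\theta)=\{(R_1,R_2)\ge0:R_1\le\mathcal C(\phi_1(\theta)),R_2\le\mathcal C(\phi_2(\theta)),R_1+R_2\le\mathcal C(\phi(\theta))\}$. (In the two-hop MAC, $P_i=\|\mathbf h_{0i}\|^2P_{S_i}$, $\alpha,\beta$ are the angles of the normalized source-to-relay channel vectors in an orthonormal basis of their span, and $\bigcup_{\theta\in[\alpha,\beta]}\mathcal R(\theta)$ is the first outer bound.) *)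

(* Defs.v *)
From Stdlib Require Import Reals.
Open Scope R_scope.

Definition Ccap (x : R) : R := / 2 * (ln (1 + x) / ln 2).

Definition phi1 (P1 alpha th : R) : R := P1 * (cos (th - alpha)) ^ 2.
Definition phi2 (P2 beta th : R) : R := P2 * (cos (th - beta)) ^ 2.
Definition phi (P1 P2 alpha beta th : R) : R := phi1 P1 alpha th + phi2 P2 beta th.

Definition in_region (P1 P2 alpha beta th R1 R2 : R) : Prop :=
  0 <= R1 /\ 0 <= R2 /\
  R1 <= Ccap (phi1 P1 alpha th) /\
  R2 <= Ccap (phi2 P2 beta th) /\
  R1 + R2 <= Ccap (phi P1 P2 alpha beta th).

Definition in_union (P1 P2 alpha beta R1 R2 : R) : Prop :=
  exists th, alpha <= th <= beta /\ in_region P1 P2 alpha beta th R1 R2.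

Definition sum_rates (P1 P2 alpha beta : R) (s : R) : Prop :=
  exists R1 R2, in_union P1 P2 alpha beta R1 R2 /\ s = R1 + R2.

Definition is_max (S : R -> Prop) (m : R) : Prop :=
  S m /\ forall s, S s -> s <= m.

Definition Tval (P1 P2 alpha beta : R) : R :=
  (P1 * sin (2 * alpha) + P2 * sin (2 * beta)) /
  (P1 * cos (2 * alpha) + P2 * cos (2 * beta)).

(* Main.v *)
Require Import Defs.
From Stdlib Require Import Reals Lra.
Open Scope R_scope.

Lemma ln_le' x y : 0 < x -> x <= y -> ln x <= ln y.
Proof. intros Hx [H|H]; [left; apply ln_increasing; auto | subst; lra]. Qed.

Lemma ln2_pos : 0 < ln 2.
Proof. rewrite <- ln_1. apply ln_increasing; lra. Qed.

Lemma Ccap_le a b : 0 <= a -> a <= b -> Ccap a <= Ccap b.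
Proof.
  intros Ha Hab. unfold Ccap. pose proof ln2_pos.
  apply Rmult_le_compat_l; [lra|]. unfold Rdiv.
  apply Rmult_le_compat_r; [left; apply Rinv_0_lt_compat; lra|].
  apply ln_le'; lra.
Qed.

Lemma Ccap_ge0 a : 0 <= a -> 0 <= Ccap a.
Proof.
  intros Ha. replace 0 with (Ccap 0). apply Ccap_le; lra.
  unfold Ccap. rewrite Rplus_0_r, ln_1. field. pose proof ln2_pos; lra.
Qed.

Lemma Ccap_sub a b : 0 <= a -> 0 <= b -> Ccap (a + b) <= Ccap a + Ccap b.
Proof.
  intros Ha Hb. unfold Ccap. pose proof ln2_pos.
  assert (ln (1 + (a+b)) <= ln (1+a) + ln (1+b)).
  { rewrite <- ln_mult by lra. apply ln_le'; [lra|]. nra. }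
  assert (/2 * (ln (1 + (a + b)) / ln 2) <= /2 * ((ln (1 + a) + ln (1 + b)) / ln 2)).
  { apply Rmult_le_compat_l; [lra|]. unfold Rdiv.
    apply Rmult_le_compat_r; [left; apply Rinv_0_lt_compat; lra|]. lra. }
  replace (/ 2 * (ln (1 + a) / ln 2) + / 2 * (ln (1 + b) / ln 2))
    with (/2 * ((ln (1 + a) + ln (1 + b)) / ln 2)) by (field; lra). lra.
Qed.

Lemma phi1_ge0 P a t : 0 < P -> 0 <= phi1 P a t.
Proof. intros. unfold phi1. assert (0 <= cos (t - a) ^ 2) by (simpl; nra). nra. Qed.
Lemma phi2_ge0 P a t : 0 < P -> 0 <= phi2 P a t.
Proof. intros. unfold phi2. assert (0 <= cos (t - a) ^ 2) by (simpl; nra). nra. Qed.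

Lemma max_from P1 P2 alpha beta ts :
  0 < P1 -> 0 < P2 -> alpha <= ts <= beta ->
  (forall t, phi P1 P2 alpha beta t <= phi P1 P2 alpha beta ts) ->
  is_max (sum_rates P1 P2 alpha beta) (Ccap (phi P1 P2 alpha beta ts)).
Proof.
  intros H1 H2 Hts Hmax.
  pose proof (phi1_ge0 P1 alpha ts H1). pose proof (phi2_ge0 P2 beta ts H2).
  split.
  - exists (Ccap (phi1 P1 alpha ts)), (Ccap (phi P1 P2 alpha beta ts) - Ccap (phi1 P1 alpha ts)).
    split; [|ring].
    exists ts. split; [exact Hts|]. unfold in_region.
    pose proof (Ccap_ge0 _ H).
    pose proof (Ccap_le (phi1 P1 alpha ts) (phi P1 P2 alpha beta ts) H ltac:(unfold phi; lra)).
    pose proof (Ccap_sub _ _ H H0). unfold phi in *. lra.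
  - intros s [R1 [R2 [[t [Ht [HR1 [HR2 [HR3 [HR4 HR5]]]]]] ->]]].
    pose proof (phi1_ge0 P1 alpha t H1). pose proof (phi2_ge0 P2 beta t H2).
    pose proof (Ccap_le (phi P1 P2 alpha beta t) (phi P1 P2 alpha beta ts)
      ltac:(unfold phi; lra) (Hmax t)). lra.
Qed.

Lemma phi_form P1 P2 alpha beta t :
  phi P1 P2 alpha beta t = (P1 + P2) / 2 +
    ((P1 * cos (2*alpha) + P2 * cos (2*beta)) * cos (2*t)
     + (P1 * sin (2*alpha) + P2 * sin (2*beta)) * sin (2*t)) / 2.
Proof.
  unfold phi, phi1, phi2.
  assert (E: forall x, cos x ^ 2 = (1 + cos (2*x)) / 2).
  { intros x. rewrite cos_2a_cos. simpl. field. }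
  rewrite !E. replace (2 * (t - alpha)) with (2*t - 2*alpha) by ring.
  replace (2 * (t - beta)) with (2*t - 2*beta) by ring.
  rewrite !cos_minus. field.
Qed.

Lemma glob_max P1 P2 alpha beta r u t :
  0 < r ->
  P1 * cos (2 * alpha) + P2 * cos (2 * beta) = r * cos u ->
  P1 * sin (2 * alpha) + P2 * sin (2 * beta) = r * sin u ->
  phi P1 P2 alpha beta t <= phi P1 P2 alpha beta (/2 * u).
Proof.
  intros Hr HA HB. rewrite !phi_form, HA, HB.
  replace (2 * (/2 * u)) with u by field.
  assert (cos u * cos (2*t) + sin u * sin (2*t) <= cos u * cos u + sin u * sin u).
  { rewrite <- !cos_minus. replace (u - u) with 0 by ring. rewrite cos_0.
    pose proof (COS_bound (u - 2*t)). lra. }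
  assert (r * (cos u * cos (2*t) + sin u * sin (2*t)) <= r * (cos u * cos u + sin u * sin u))
    by (apply Rmult_le_compat_l; lra).
  lra.
Qed.

Lemma sin_nonneg_pos x : - PI < x < PI -> 0 <= sin x -> 0 <= x.
Proof.
  intros Hx Hs. destruct (Rle_lt_dec 0 x); auto.
  assert (0 < sin (- x)) by (apply sin_gt_0; lra).
  rewrite sin_neg in H. lra.
Qed.

Lemma in_range P1 P2 alpha beta r u :
  0 <= alpha -> alpha <= beta -> beta <= PI / 2 ->
  0 < P1 -> 0 < P2 -> 0 < r -> 0 < u < PI ->
  P1 * cos (2 * alpha) + P2 * cos (2 * beta) = r * cos u ->
  P1 * sin (2 * alpha) + P2 * sin (2 * beta) = r * sin u ->
  alpha <= /2 * u <= beta.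
Proof.
  intros Ha Hab Hb H1 H2 Hr Hu HA HB.
  assert (Hs : 0 <= sin (2*beta - 2*alpha)) by (apply sin_ge_0; lra).
  assert (E1 : r * sin (u - 2*alpha) = P2 * sin (2*beta - 2*alpha)).
  { rewrite !sin_minus. rewrite Rmult_minus_distr_l.
    replace (r * (sin u * cos (2 * alpha))) with ((r * sin u) * cos (2*alpha)) by ring.
    replace (r * (cos u * sin (2 * alpha))) with ((r * cos u) * sin (2*alpha)) by ring.
    rewrite <- HA, <- HB. ring. }
  assert (E2 : r * sin (2*beta - u) = P1 * sin (2*beta - 2*alpha)).
  { rewrite !sin_minus. rewrite Rmult_minus_distr_l.
    replace (r * (sin (2*beta) * cos u)) with ((r * cos u) * sin (2*beta)) by ring.
    replace (r * (cos (2*beta) * sin u)) with ((r * sin u) * cos (2*beta)) by ring.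
    rewrite <- HA, <- HB. ring. }
  assert (0 <= sin (u - 2*alpha)).
  { destruct (Rle_lt_dec 0 (sin (u - 2*alpha))); auto. nra. }
  assert (0 <= sin (2*beta - u)).
  { destruct (Rle_lt_dec 0 (sin (2*beta - u))); auto. nra. }
  pose proof (sin_nonneg_pos (u - 2*alpha) ltac:(lra) H).
  pose proof (sin_nonneg_pos (2*beta - u) ltac:(lra) H0).
  lra.
Qed.

Theorem lemma5 (P1 P2 alpha beta : R) :
  0 <= alpha -> alpha <= beta -> beta <= PI / 2 ->
  0 < P1 -> 0 < P2 ->
  P1 * cos (2 * alpha) + P2 * cos (2 * beta) <> 0 ->
  let T := Tval P1 P2 alpha beta in
  let th1 := / 2 * atan T in
  let th2 := / 2 * (PI + atan T) in
  let M := sum_rates P1 P2 alpha beta in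
  (0 < T -> is_max M (Ccap (phi P1 P2 alpha beta th1))) /\
  (T < 0 -> is_max M (Ccap (phi P1 P2 alpha beta th2))) /\
  (T = 0 -> is_max M (Ccap (phi P1 P2 alpha beta th1)) \/
            is_max M (Ccap (phi P1 P2 alpha beta th2))).
Proof.
  intros Ha Hab Hb H1 H2 HA0 T th1 th2 M.
  set (A := P1 * cos (2 * alpha) + P2 * cos (2 * beta)) in *.
  set (B := P1 * sin (2 * alpha) + P2 * sin (2 * beta)).
  assert (HT : T = B / A) by reflexivity.
  assert (HB : B = A * T) by (rewrite HT; field; auto).
  assert (HBge : 0 <= B).
  { unfold B. assert (0 <= sin (2*alpha)) by (apply sin_ge_0; lra).
    assert (0 <= sin (2*beta)) by (apply sin_ge_0; lra). nra. }
  pose proof (atan_bound T) as Hat.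
  pose proof PI_RGT_0.
  assert (Hsq : 0 < sqrt (1 + T²)) by (apply sqrt_lt_R0; unfold Rsqr; nra).
  split; [|split].
  - intros HTp. assert (HAp : 0 < A).
    { destruct (Rlt_le_dec 0 A); auto. destruct r; [|contradiction].
      assert (A * T < 0) by nra. lra. }
    assert (Hu : 0 < atan T) by (rewrite <- atan_0; apply atan_increasing; auto).
    set (r := A * sqrt (1 + T²)).
    assert (Hr : 0 < r) by (unfold r; nra).
    assert (EA : A = r * cos (atan T)) by (rewrite cos_atan; unfold r; field; lra).
    assert (EB : B = r * sin (atan T)) by (rewrite sin_atan, HB; unfold r; field; lra).
    apply max_from; auto.
    + apply (in_range P1 P2 alpha beta r); auto. lra.
    + intros t. apply (glob_max _ _ _ _ r); auto.
  - intros HTn. assert (HAn : A < 0).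
    { destruct (Rlt_le_dec A 0) as [|r]; auto.
      destruct r as [r|r]; [|exfalso; apply HA0; auto].
      assert (A * T < 0) by nra. lra. }
    assert (Hu : atan T < 0) by (rewrite <- atan_0; apply atan_increasing; auto).
    set (r := - A * sqrt (1 + T²)).
    assert (Hr : 0 < r) by (unfold r; nra).
    assert (EA : A = r * cos (PI + atan T)).
    { rewrite Rplus_comm, neg_cos, cos_atan; unfold r; field; lra. }
    assert (EB : B = r * sin (PI + atan T)).
    { rewrite Rplus_comm, neg_sin, sin_atan, HB; unfold r; field; lra. }
    apply max_from; auto.
    + apply (in_range P1 P2 alpha beta r); auto. lra.
    + intros t. apply (glob_max _ _ _ _ r); auto.
  - intros HT0. rewrite HT0 in HB. rewrite Rmult_0_r in HB.
    unfold th1, th2. rewrite HT0, atan_0, Rplus_0_r, Rmult_0_r.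
    assert (Hs1 : 0 <= sin (2*alpha)) by (apply sin_ge_0; lra).
    assert (Hs2 : 0 <= sin (2*beta)) by (apply sin_ge_0; lra).
    assert (HB' : P1 * sin (2 * alpha) + P2 * sin (2 * beta) = 0) by exact HB.
    assert (M1 : 0 <= P1 * sin (2*alpha)) by (apply Rmult_le_pos; lra).
    assert (M2 : 0 <= P2 * sin (2*beta)) by (apply Rmult_le_pos; lra).
    assert (Z1 : sin (2*alpha) = 0).
    { assert (P1 * sin (2*alpha) = 0) by lra.
      destruct (Rmult_integral _ _ H0); [lra|auto]. }
    assert (Z2 : sin (2*beta) = 0).
    { assert (P2 * sin (2*beta) = 0) by lra.
      destruct (Rmult_integral _ _ H0); [lra|auto]. }
    assert (K : forall x, 0 <= x <= PI -> sin x = 0 -> x = 0 \/ x = PI).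
    { intros x Hx Hsx. destruct (Req_dec x 0); auto. destruct (Req_dec x PI); auto.
      assert (0 < sin x) by (apply sin_gt_0; lra). lra. }
    destruct (K (2*alpha) ltac:(lra) Z1) as [Ea|Ea];
    destruct (K (2*beta) ltac:(lra) Z2) as [Eb|Eb].
    + left. apply max_from; auto. lra.
      intros t. replace 0 with (/2 * 0) by ring.
      apply (glob_max _ _ _ _ (P1 + P2)); [lra| |].
      * rewrite cos_0. unfold A in *. rewrite Ea, Eb, cos_0. ring.
      * rewrite sin_0. fold B. lra.
    + destruct (Rlt_le_dec 0 A) as [HAp|HAn].
      * left. apply max_from; auto. lra.
        intros t. replace 0 with (/2 * 0) by ring.
        apply (glob_max _ _ _ _ A); [lra| |].
        -- rewrite cos_0. unfold A; ring.
        -- rewrite sin_0. fold B. lra.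
      * right. apply max_from; auto. lra.
        intros t. apply (glob_max _ _ _ _ (-A)); [destruct HAn; [lra|contradiction]| |].
        -- rewrite cos_PI. unfold A; ring.
        -- rewrite sin_PI. fold B. lra.
    + lra.
    + right. apply max_from; auto. lra.
      intros t. apply (glob_max _ _ _ _ (P1 + P2)); [lra| |].
      * rewrite cos_PI. unfold A in *. rewrite Ea, Eb, cos_PI. ring.
      * rewrite sin_PI. fold B. lra.
Qed.
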